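(* Let $p$ and $q$ be primes, $k\ge1$ and $E=\mathbb{Q}(\mu_{p^k})$. If $E$ has an efficient $\mu_{q^n}$-grading for some $n\ge1$, then $q^n=2$ or $p=q$. Moreover, if $p\neq2$, then $E$ has exactly one efficient $\mu_2$-grading and no efficient $\mu_{2p}$-grading.
   Context: $\mu_m\subseteq\mathbb{C}^*$ is the cyclic group of $m$-th roots of unity. For a group $\Gamma$, a $\Gamma$-grading of $E$ (as a $\mathbb{Q}$-algebra) is a family $\{E_\gamma\}_{\gamma\in\Gamma}$ of $\mathbb{Q}$-subspaces with $\bigoplus_\gamma E_\gamma=E$, $1\in E_1$ and $E_\gamma E_\delta\subseteq E_{\gamma\delta}$. It is efficient if $\Gamma$ is generated as a group by $\{\gamma: E_\gamma\ne0\}$. *)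

(* Defs.v *)
From HB Require Import structures.
From mathcomp Require Import all_boot all_order all_algebra all_fingroup all_field.
Set Implicit Arguments. Unset Strict Implicit. Unset Printing Implicit Defensive.
Import GRing.Theory.
Local Open Scope ring_scope.

Definition is_grading (gT : finGroupType) (L : fieldExtType rat)
    (V : {ffun gT -> {vspace L}}) : Prop :=
  [/\ (\sum_(g : gT) V g)%VS = fullv,
      directv (\sum_(g : gT) V g)%VS,
      1 \in V 1%g &
      forall (g h : gT) (x y : L), x \in V g -> y \in V h -> x * y \in V (g * h)%g].

Definition is_efficient_grading (gT : finGroupType) (L : fieldExtType rat)
    (V : {ffun gT -> {vspace L}}) : Prop :=
  is_grading V /\ <<[set g : gT | V g != 0%VS]>>%g = [set: gT].

(* The cyclic group mu_m of m-th roots of unity, for m >= 2, is modelled by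
   its isomorphic copy Z/mZ (written multiplicatively as a finGroupType,
   i.e. with group law addition mod m). *)
Definition mu (m : nat) : finGroupType := 'Z_m.

Definition has_efficient_mu_grading (L : fieldExtType rat) (m : nat) : Prop :=
  exists V : {ffun mu m -> {vspace L}}, is_efficient_grading V.

(* Main.v *)
Require Import Defs.
From HB Require Import structures.
From mathcomp Require Import all_boot all_order all_algebra all_fingroup all_field.
From mathcomp Require Import zify cyclic.
Import GRing.Theory Num.Theory.
Local Open Scope ring_scope.
Set Implicit Arguments.
Unset Strict Implicit.

Section Emb.
Variables (L : fieldExtType rat) (z : L).
Hypothesis hL : <<1; z>>%VS = fullv.

Local Notation pL r := (map_poly (in_alg L) r).
Local Notation pC r := (map_poly (ratr : rat -> algC) r).

Lemma emb_exists : {f : {rmorphism L -> algC} | forall a, f a%:A = ratr a}.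
Proof.
have [m Dm] : {m : {poly rat} | minPoly 1 z = pL m}.
  exists (map_poly (coord [tuple 1] 0) (minPoly 1 z)).
  rewrite -map_poly_comp map_poly_id // => _ /(allP (minPolyOver 1 z))/vlineP[a ->] /=.
  by rewrite linearZ /= (coord_free 0) ?mulr1 // seq1_free ?oner_eq0.
have szm : size (pC m) != 1%N.
  by rewrite size_map_poly -(size_map_poly (in_alg L)) -Dm size_minPoly.
have [u rootu] := sig_eqW (closed_rootP _ szm).
pose s (v : L) : {poly rat} := map_poly (coord [tuple 1] 0) (Fadjoin_poly 1 z v).
pose PhiL (r : {poly rat}) := (pL r).[z].
pose PhiC (r : {poly rat}) := (pC r).[u].
have sK v : PhiL (s v) = v.
  rewrite /PhiL /s -map_poly_comp map_poly_id; last first.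
    move=> _ /(allP (Fadjoin_polyOver 1 z v))/vlineP[a ->] /=.
    by rewrite linearZ /= (coord_free 0) ?mulr1 // seq1_free ?oner_eq0.
  by rewrite Fadjoin_poly_eq // hL memvf.
have ker r : PhiL r = 0 -> PhiC r = 0.
  move=> r0; have : minPoly 1 z %| pL r.
    by apply: minPoly_dvdp; [apply: alg_polyOver | apply/rootP].
  rewrite Dm dvdp_map => /dvdpP[c ->].
  by rewrite /PhiC rmorphM hornerM (rootP rootu) mulr0.
have PhiLB r1 r2 : PhiL (r1 - r2) = PhiL r1 - PhiL r2 by rewrite /PhiL rmorphB hornerD hornerN.
have PhiCB r1 r2 : PhiC (r1 - r2) = PhiC r1 - PhiC r2 by rewrite /PhiC rmorphB hornerD hornerN.
have PhiLM r1 r2 : PhiL (r1 * r2) = PhiL r1 * PhiL r2 by rewrite /PhiL rmorphM hornerM.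
have PhiCM r1 r2 : PhiC (r1 * r2) = PhiC r1 * PhiC r2 by rewrite /PhiC rmorphM hornerM.
have key r : PhiC (s (PhiL r)) = PhiC r.
  by apply/eqP; rewrite -subr_eq0 -PhiCB; apply/eqP/ker; rewrite PhiLB sK subrr.
pose f v := PhiC (s v).
have fB : zmod_morphism f.
  move=> v w; rewrite /f -{1}(sK v) -{1}(sK w) -PhiLB key PhiCB //.
have fM : monoid_morphism f.
  split.
    have E1 : PhiL 1 = 1 by rewrite /PhiL rmorph1 hornerC.
    by rewrite /f -{1}E1 key /PhiC rmorph1 hornerC.
  move=> v w; rewrite /f -{1}(sK v) -{1}(sK w) -PhiLM key PhiCM //.
pose faM := GRing.isZmodMorphism.Build _ _ f fB.
pose fmM := GRing.isMonoidMorphism.Build _ _ f fM.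
pose fRM : {rmorphism L -> algC} := HB.pack f faM fmM.
exists fRM => a /=.
have Ea : PhiL a%:P = a%:A by rewrite /PhiL map_polyC hornerC.
rewrite /f -Ea key /PhiC map_polyC hornerC //=.
Qed.

Lemma poly1P (y : L) : {m : {poly rat} | minPoly 1 y = pL m}.
Proof.
exists (map_poly (coord [tuple 1] 0) (minPoly 1 y)).
rewrite -map_poly_comp map_poly_id // => _ /(allP (minPolyOver 1 y))/vlineP[a ->] /=.
by rewrite linearZ /= (coord_free 0) ?mulr1 // seq1_free ?oner_eq0.
Qed.

Variable f : {rmorphism L -> algC}.
Hypothesis hf : forall a, f a%:A = ratr a.

Lemma emb_horner r y : f (pL r).[y] = (pC r).[f y].
Proof.
rewrite -horner_map /= -map_poly_comp; congr (_.[_]).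
by apply: eq_map_poly => a /=; rewrite hf.
Qed.

Lemma adj_dim y : (adjoin_degree (1%VS : {vspace L}) y <= \dim {:L})%N.
Proof. by rewrite adjoin_degreeE dimv1 divn1 dimvS // subvf. Qed.

Lemma totient_le_dim n (y : L) : n.-primitive_root y -> (totient n <= \dim {:L})%N.
Proof.
move=> py; have pfy : n.-primitive_root (f y) by rewrite fmorph_primitive_root.
have [m Dm] := poly1P y.
have [c [Dc _] dvc] := minCpolyP (f y).
have : c %| m.
  rewrite -dvc; apply/rootP; rewrite -emb_horner -Dm minPolyxx rmorph0 //.
move/dvdp_leq => H.
have m0 : m != 0.
  by rewrite -size_poly_eq0 -(size_map_poly (in_alg L)) -Dm size_minPoly.
have := H m0.
rewrite -(size_map_poly (in_alg L) m) -Dm size_minPoly.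
rewrite -(size_map_poly (ratr : rat -> algC) c) -Dc (minCpoly_cyclotomic pfy).
rewrite size_cyclotomic ltnS => H2; exact: leq_trans H2 (adj_dim y).
Qed.

Variable N : nat.
Hypothesis hz : N.-primitive_root z.

Lemma dim_le_totient : (\dim {:L} <= totient N)%N.
Proof.
have pfz : N.-primitive_root (f z) by rewrite fmorph_primitive_root.
have [c [Dc _] dvc] := minCpolyP (f z).
have cz : root (pL c) z.
  apply/rootP/(fmorph_inj f); rewrite emb_horner -Dc rmorph0.
  exact/rootP/root_minCpoly.
have : minPoly 1 z %| pL c by apply: minPoly_dvdp => //; apply: alg_polyOver.
move/dvdp_leq => H.
have c0 : pL c != 0.
  by rewrite map_poly_eq0 -(map_poly_eq0 (ratr : rat -> algC)) -Dc minCpoly_eq0.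
have := H c0; rewrite size_minPoly size_map_poly.
rewrite -(size_map_poly (ratr : rat -> algC) c) -Dc (minCpoly_cyclotomic pfz).
by rewrite size_cyclotomic ltnS -hL adjoin_degreeE dimv1 divn1.
Qed.

Lemma minPoly_root_exp j : coprime j N -> root (minPoly 1 z) (z ^+ j).
Proof.
move=> cj; have pfz : N.-primitive_root (f z) by rewrite fmorph_primitive_root.
have [m Dm] := poly1P z.
have [c [Dc _] dvc] := minCpolyP (f z).
have : c %| m.
  rewrite -dvc; apply/rootP; rewrite -emb_horner -Dm minPolyxx rmorph0 //.
rewrite -(dvdp_map (ratr : {rmorphism rat -> algC})) -Dc (minCpoly_cyclotomic pfz).
move=> /dvdpP[r Dr].
rewrite Dm; apply/rootP/(fmorph_inj f); rewrite emb_horner rmorph0 rmorphXn Dr hornerM.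
have : root (cyclotomic (f z) N) (f z ^+ j).
  by rewrite root_cyclotomic // prim_root_exp_coprime.
by move/rootP->; rewrite mulr0.
Qed.
End Emb.
Section Grading.
Variables (L : fieldExtType rat) (m : nat) (V : {ffun 'Z_m -> {vspace L}}).
Hypothesis m_gt1 : (1 < m)%N.
Hypothesis hV : is_efficient_grading V.

Lemma grM {g h : 'Z_m} {a b : L} : a \in V g -> b \in V h -> a * b \in V (g + h).
Proof. by case: hV => -[_ _ _ H] _; apply: H. Qed.

Lemma gr1 : 1 \in V 0. Proof. by case: hV => -[]. Qed.

Lemma gr_nz (g : 'Z_m) : V g != 0%VS.
Proof.
case: hV => _ eff.
set S := [set g | V g != 0%VS] in eff.
have gS : group_set S.
  apply/andP; split.
    rewrite inE; apply/eqP => V0; have := gr1; rewrite -[0]/(1%g : 'Z_m) V0 memv0.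
    by rewrite oner_eq0.
  apply/subsetP => x /mulsgP[a b]; rewrite !inE => Va Vb ->.
  rewrite -!vpick0 in Va Vb.
  apply: contraNneq (mulf_neq0 Va Vb) => W.
  have := grM (memv_pick (V a)) (memv_pick (V b)).
  by rewrite W memv0.
have : g \in S by rewrite -(gen_set_id gS) eff inE.
by rewrite inE.
Qed.

Definition grx := vpick (V 1).
Lemma grx_in : grx \in V 1. Proof. exact: memv_pick. Qed.
Lemma grx_nz : grx != 0. Proof. by rewrite vpick0 gr_nz. Qed.

Lemma grxX j : grx ^+ j \in V (j%:R).
Proof.
elim: j => [|j IH]; first by rewrite expr0 gr1.
by rewrite exprSr -[j.+1]addn1 natrD; apply: grM IH grx_in.
Qed.

Lemma grxm : grx ^+ m \in V 0.
Proof. by have := grxX m; rewrite pchar_Zp. Qed.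

Lemma grV0_aspace : is_aspace (V 0).
Proof.
rewrite /is_aspace has_algid1 ?gr1 //=; apply/prodvP => a b Va Vb.
by have := grM Va Vb; rewrite addr0.
Qed.

Definition grK : {subfield L} := ASpace grV0_aspace.

Lemma val_lt (g : 'Z_m) : (val g < m)%N.
Proof. have := ltn_ord g; by rewrite [X in (_ < X)%N -> _]Zp_cast. Qed.

Lemma g_nat (g : 'Z_m) : g = (val g)%:R.
Proof. by rewrite natr_Zp. Qed.

Lemma gr_back {g : 'Z_m} {y : L} : y \in V g -> y * grx ^+ (m - val g) \in V 0.
Proof.
move=> Vy; have := grM Vy (grxX (m - val g)).
suff -> : g + (m - val g)%:R = 0 by [].
by rewrite {1}(g_nat g) -natrD subnKC ?pchar_Zp // ltnW // val_lt.
Qed.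

Lemma gr_dim (g : 'Z_m) : \dim (V g) = \dim (V 0).
Proof.
apply/eqP; rewrite eqn_leq; apply/andP; split.
  rewrite -(dim_cosetv (V g) (expf_neq0 (m - val g) grx_nz)).
  apply: dimvS; apply/prodvP => a b Va /vlineP[c ->].
  by rewrite -scalerAr rpredZ // gr_back.
rewrite -(dim_cosetv (V 0) (expf_neq0 (val g) grx_nz)).
apply: dimvS; apply/prodvP => a b Va /vlineP[c ->].
rewrite -scalerAr rpredZ //.
have := grM Va (grxX (val g)); by rewrite add0r -g_nat.
Qed.


Lemma grK_dimL : \dim {:L} = (m * \dim (V (0%R : 'Z_m)))%N.
Proof.
case: hV => -[sumV dirV _ _] _.
move/directvP: dirV => /= Hd.
rewrite -sumV Hd (eq_bigr (fun _ => \dim (V (0%R : 'Z_m)))) => [|g _]; last exact: gr_dim.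
rewrite sum_nat_const card_ord; congr (_ * _)%N; exact: Zp_cast.
Qed.

Lemma grK_dim : \dim_grK {:L} = m.
Proof. by rewrite grK_dimL; apply: (mulnK _ (adim_gt0 grK)). Qed.

Lemma grK_adj : <<grK; grx>>%VS = fullv.
Proof.
apply/eqP; rewrite eqEsubv subvf /=.
case: hV => -[sumV _ _ _] _; rewrite -sumV.
apply/subv_sumP => g _; apply/subvP => y Vy.
have xnz : grx ^+ (m - val g) != 0 by rewrite expf_neq0 // grx_nz.
rewrite -[y](mulfK xnz); apply: memvM.
  by apply: (subvP (subv_adjoin grK grx)); apply: gr_back.
by rewrite memvV; apply: rpredX; apply: memv_adjoin.
Qed.

Lemma grxm_K : grx ^+ m \in grK.
Proof. exact: grxm. Qed.

Lemma gr_div1 y : y \in V 1 -> y / grx \in grK.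
Proof.
move=> Vy; have := gr_back Vy.
have v1 : val (1 : 'Z_m) = 1%N by rewrite /= modn_small.
rewrite v1 => H.
have -> : y / grx = (y * grx ^+ (m - 1)) / grx ^+ m.
  rewrite -{2}(subnK (ltnW m_gt1)) exprD invfM mulrA mulfK //.
  by rewrite expf_neq0 // grx_nz.
apply: memvM => //; rewrite memvV; exact: grxm.
Qed.
End Grading.

Lemma prim_mul (F : fieldType) r s (a b : F) : coprime r s ->
  r.-primitive_root a -> s.-primitive_root b -> (r * s)%N.-primitive_root (a * b).
Proof.
move=> crs pa pb.
have r0 := prim_order_gt0 pa; have s0 := prim_order_gt0 pb.
have ab1 : (a * b) ^+ (r * s) = 1.
  by rewrite exprMn exprM (prim_expr_order pa) mulnC exprM (prim_expr_order pb) !expr1n mulr1.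
have rs0 : (0 < r * s)%N by rewrite muln_gt0 r0 s0.
have [d pd dvd] := prim_order_exists rs0 ab1.
suff -> : (r * s)%N = d by [].
apply/eqP; rewrite eqn_dvd dvd andbT.
have abd : (a * b) ^+ d = 1 by apply: prim_expr_order.
rewrite Gauss_dvd //; apply/andP; split.
- have : (a * b) ^+ (d * s) = 1 by rewrite exprM abd expr1n.
  have bd : b ^+ (d * s) = 1 by rewrite mulnC exprM (prim_expr_order pb) expr1n.
  rewrite exprMn bd mulr1 => /eqP.
  by rewrite -(prim_order_dvd pa) Gauss_dvdl.
- have : (a * b) ^+ (d * r) = 1 by rewrite exprM abd expr1n.
  have ad : a ^+ (d * r) = 1 by rewrite mulnC exprM (prim_expr_order pa) expr1n.
  rewrite exprMn ad mul1r => /eqP.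
  by rewrite -(prim_order_dvd pb) Gauss_dvdl // coprime_sym.
Qed.
Section NT.
Local Open Scope nat_scope.
Lemma sq1_mod (p k e : nat) : prime p -> p != 2 -> (1 <= k)%N ->
  (e * e == 1 %[mod p ^ k]) -> (e == 1 %[mod p ^ k]) || (e == (p ^ k).-1 %[mod p ^ k]).
Proof.
move=> pp p2 hk.
have N1 : (1 < p ^ k)%N.
  apply: leq_trans (prime_gt1 pp) _; rewrite -{1}(expn1 p) leq_pexp2l //.
  exact: prime_gt0.
case: e => [|e].
  by rewrite muln0 mod0n modn_small.
rewrite eqn_mod_dvd; last by rewrite mulnS.
have -> : (e.+1 * e.+1 - 1 = e * e.+2)%N by nia.
have H1 : (e.+1 - 1)%N = e by rewrite subn1.
case pe : (p %| e.+2)%N.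
- move=> Hd; apply/orP; right.
  have npe : ~~ (p %| e)%N.
    apply/negP => pe'.
    have : (p %| e.+2 - e)%N by rewrite dvdn_sub.
    rewrite -addn2 addKn => /(dvdn_leq (isT : (0 < 2)%N)) => ple.
    have := prime_gt1 pp; move: p2 ple; clear; lia.
  have cNe : coprime (p ^ k) e by rewrite coprime_pexpl // prime_coprime //.
  move: Hd; rewrite Gauss_dvdr // => Hd.
  rewrite -(eqn_modDr 1) !addn1 prednK ?(ltnW N1) // modnn.
  by move: Hd; rewrite /dvdn => /eqP ->.
- move=> Hd; apply/orP; left.
  have cNe : coprime (p ^ k) e.+2 by rewrite coprime_pexpl // prime_coprime // pe.
  move: Hd; rewrite mulnC Gauss_dvdr // => Hd.
  by rewrite eqn_mod_dvd // subn1.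
Qed.
End NT.

Section Cyc.
Variables (L : fieldExtType rat) (p k : nat).
Hypotheses (pp : prime p) (hk : (1 <= k)%N).
Variable z : L.
Hypothesis hz : (p ^ k)%N.-primitive_root z.
Hypothesis hL : <<1; z>>%VS = fullv.
Local Notation N := (p ^ k)%N.

Lemma N_gt1 : (1 < N)%N.
Proof.
apply: leq_trans (prime_gt1 pp) _; rewrite -{1}(expn1 p) leq_pexp2l //.
exact: prime_gt0.
Qed.

Lemma split_data :
  exists2 rs : seq L, ('X^N - 1 : {poly L}) %= \prod_(y <- rs) ('X - y%:P)
    & <<1 & rs>>%VS = fullv.
Proof.
exists [seq z ^+ i | i <- index_iota 0 N].
  by rewrite big_map (factor_Xn_sub_1 hz) eqpxx.
apply/eqP; rewrite eqEsubv subvf -hL; apply/FadjoinP; split.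
  exact: subv_adjoin_seq.
apply: seqv_sub_adjoin; apply/mapP; exists 1%N; last by rewrite expr1.
by rewrite mem_index_iota N_gt1.
Qed.

Lemma split_ax : splitting_field_axiom L.
Proof.
exists ('X^N - 1).
  by rewrite rpredB ?rpredX ?polyOverX ?rpred1.
have [rs H1 H2] := split_data; by exists rs.
Qed.

Definition SL : Type := L.
HB.instance Definition _ := FieldExt.on SL.
HB.instance Definition _ := FieldExt_isSplittingField.Build rat SL split_ax.

Definition zS : SL := z.
Lemma hzS : N.-primitive_root zS. Proof. exact: hz. Qed.
Lemma hLS : <<1; zS>>%VS = fullv. Proof. exact: hL. Qed.

Lemma galois1 : galois (1%AS : {subfield SL}) fullv.
Proof.
apply/splitting_galoisField; exists ('X^N - 1); split.
- by rewrite rpredB ?rpredX ?polyOverX ?rpred1.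
- apply: separable_Xn_sub_1.
  rewrite -(rmorph_nat (in_alg SL)) fmorph_eq0 pnatr_eq0 -lt0n.
  exact: ltnW N_gt1.
- have [rs H1 H2] := split_data; by exists rs.
Qed.

Lemma galoisK (K : {subfield SL}) : galois K fullv.
Proof. by apply: (galoisS _ galois1); rewrite sub1v subvf. Qed.

Lemma gal_z (g : gal_of {:SL}) : {e : nat | g zS = zS ^+ e}.
Proof.
have : (g zS) ^+ N = 1 by rewrite -rmorphXn (prim_expr_order hzS) rmorph1.
by case/(prim_rootP hzS) => i ->; exists i.
Qed.

Lemma gal_eq_z (g h : gal_of {:SL}) : g zS = h zS -> g = h.
Proof.
move=> ghz; apply/eqP/gal_eqP => v _.
have : v \in <<1; zS>>%VS by rewrite hLS memvf.
case/Fadjoin1_polyP => r ->.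
rewrite -!horner_map /= ghz; congr (_.[_]).
rewrite -!map_poly_comp; apply: eq_map_poly => a /=.
by rewrite !rmorph_alg.
Qed.

Lemma galMz (g h : gal_of {:SL}) a : (g * h)%g a = h (g a).
Proof. by rewrite galM ?memvf. Qed.

Lemma gal1z a : (1%g : gal_of {:SL}) a = a.
Proof. exact: gal_id. Qed.

Lemma galXz (g : gal_of {:SL}) a n : g (a ^+ n) = (g a) ^+ n.
Proof. exact: rmorphXn. Qed.

Lemma galMulz (g : gal_of {:SL}) a b : g (a * b) = g a * g b.
Proof. exact: rmorphM. Qed.

Lemma galNz (g : gal_of {:SL}) a : g (- a) = - g a.
Proof. exact: rmorphN. Qed.

Lemma galVz (g : gal_of {:SL}) a : g (a^-1) = (g a)^-1.
Proof. exact: fmorphV. Qed.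

Lemma galBz (g : gal_of {:SL}) a b : g (a - b) = g a - g b.
Proof. exact: rmorphB. Qed.

Lemma gal1Mz (g : gal_of {:SL}) : g 1 = 1.
Proof. exact: rmorph1. Qed.

Lemma gal_comm (g h : gal_of {:SL}) : (g * h)%g = (h * g)%g.
Proof.
apply: gal_eq_z; rewrite !galMz.
have [e De] := gal_z g; have [f Df] := gal_z h.
by rewrite De Df !galXz De Df -!exprM mulnC.
Qed.


Lemma sigma_ex : {s : gal_of {:SL} | s zS = zS ^+ N.-1}.
Proof.
have [f hf] := emb_exists hL.
have hr := minPoly_root_exp hf hz (coprimePn (ltnW N_gt1)).
have hom1 : kHom 1 1 (\1%VF : 'End(SL)) := kHom1 _ _.
have hr' : root (map_poly (\1%VF : 'End(SL)) (minPoly 1 zS)) (zS ^+ N.-1).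
  by rewrite map_poly_id // => a _; rewrite id_lfunE.
have := kHomExtendP (subvv _) hom1 hr'; rewrite hLS -kAutfE => /kAut_to_gal[s _ Ds].
by exists s; rewrite -Ds ?memvf // (kHomExtend_val hom1 hr').
Qed.

Definition sigma := sval sigma_ex.
Lemma sigma_z : sigma zS = zS ^+ N.-1.
Proof. exact: svalP sigma_ex. Qed.


Lemma invol (p2 : p != 2) (g : gal_of {:SL}) :
  (g * g)%g = 1%g -> g = 1%g \/ g = sigma.
Proof.
move=> gg; have [e De] := gal_z g.
have : (g * g)%g zS = zS by rewrite gg gal_id.
have E : g (g zS) = g (zS ^+ e) := congr1 g De.
rewrite galMz E galXz De -exprM => /eqP.
rewrite -{2}(expr1 zS) (eq_prim_root_expr hzS) => Hmod.
case/orP: (sq1_mod pp p2 hk Hmod) => He.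
  left; apply: gal_eq_z; rewrite De gal_id -{2}(expr1 zS).
  by apply/eqP; rewrite (eq_prim_root_expr hzS).
right; apply: gal_eq_z; rewrite De sigma_z.
by apply/eqP; rewrite (eq_prim_root_expr hzS).
Qed.


Lemma grading_roots m (V : {ffun 'Z_m -> {vspace SL}}) :
  (1 < m)%N -> is_efficient_grading V -> exists w : SL, m.-primitive_root w.
Proof.
move=> m1 hV.
pose K := grK hV; pose x := grx V.
have Kx : <<K; x>>%VS = fullv := grK_adj m1 hV.
have xnz : x != 0 := grx_nz hV.
have dimH : #|('Gal({:SL} / K))%g| = m by rewrite -galois_dim ?galoisK // grK_dim.
have gal_eq_x g h : g \in ('Gal({:SL} / K))%g -> h \in ('Gal({:SL} / K))%g -> g x = h x -> g = h.
  move=> gK hK eqx; apply/eqP/gal_eqP => v _.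
  have : v \in <<K; x>>%VS by rewrite Kx memvf.
  case/Fadjoin_polyP => q Kq ->.
  by rewrite -!horner_map /= !(fixedPoly_gal (subvf K)) // eqx.
pose rs := map (fun g : gal_of {:SL} => g x / x) (enum ('Gal({:SL} / K))%g).
have : has m.-primitive_root rs.
  apply: has_prim_root; first exact: ltnW.
  - apply/allP => _ /mapP[g gH ->]; rewrite mem_enum in gH.
    rewrite unity_rootE exprMn exprVn -galXz (fixed_gal (subvf K)) //.
      by rewrite divff // expf_neq0.
    exact: grxm_K.
  - rewrite map_inj_in_uniq ?enum_uniq // => g h; rewrite !mem_enum => gH hH.
    by move/(mulIf (invr_neq0 xnz)); apply: gal_eq_x.
  - by rewrite size_map -cardE dimH.
by case/hasP => w _ pw; exists w.
Qed.


Lemma part1 q n : prime q -> (1 <= n)%N -> has_efficient_mu_grading L (q ^ n) ->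
  (q ^ n = 2)%N \/ p = q.
Proof.
move=> pq hn [V hV].
case: (eqVneq p q) => [-> | npq]; first by right.
case: (eqVneq (q ^ n)%N 2) => [-> | qn2]; first by left.
exfalso.
have m1 : (1 < q ^ n)%N.
  apply: leq_trans (prime_gt1 pq) _; rewrite -{1}(expn1 q) leq_pexp2l //.
  exact: prime_gt0.
have [w pw] := grading_roots (V := V) m1 hV.
have [r [rdv cr tr]] : exists r, [/\ (r %| q ^ n)%N, coprime r N & (1 < totient r)%N].
  case: (eqVneq q 2) => [q2 | q2].
    have n2 : (2 <= n)%N.
      rewrite ltnNge; apply/negP => n1.
      have E : n = 1%N by apply/eqP; rewrite eqn_leq n1 hn.
      by move: qn2; rewrite E q2.
    exists 4%N; split.
    - by rewrite q2 -(subnK n2) expnD dvdn_mull.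
    - rewrite (_ : 4 = 2 ^ 2)%N // coprime_pexpl // coprime_pexpr //.
      by move: npq; rewrite q2 prime_coprime // dvdn_prime2 // eq_sym.
    - by [].
  exists q; split.
  - by rewrite -{1}(expn1 q) dvdn_exp2l.
  - rewrite coprime_pexpr // prime_coprime // dvdn_prime2 // eq_sym //.
  - rewrite totient_prime //; have := prime_gt1 pq; move: q2; clear; lia.
have pw' := dvdn_prim_root pw rdv.
have py := prim_mul cr pw' hzS.
have [f hf] := emb_exists hL.
have H1 := totient_le_dim hf py.
have H2 := dim_le_totient hL hf hz.
move: (leq_trans H1 H2); rewrite totient_coprime //.
have : (0 < totient N)%N by rewrite totient_gt0 (ltnW N_gt1).
move: tr; clear; nia.
Qed.


Lemma sigma_invol : (sigma * sigma)%g = 1%g.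
Proof.
apply: gal_eq_z; rewrite galMz gal1z (congr1 sigma sigma_z) galXz sigma_z -exprM.
rewrite -{2}(expr1 zS); apply/eqP; rewrite (eq_prim_root_expr hzS).
have N1 := N_gt1.
have E : (N.-1 * N.-1 = (N - 2) * N + 1)%N.
  by move: N1; move: N => n; clear; nia.
by rewrite E modnMDl.
Qed.

Lemma sigma_sigma v : sigma (sigma v) = v.
Proof. by rewrite -galMz sigma_invol gal_id. Qed.

Lemma gal_eq_adj (K : {subfield SL}) x g h :
  <<K; x>>%VS = fullv -> g \in ('Gal({:SL} / K))%g -> h \in ('Gal({:SL} / K))%g ->
  g x = h x -> g = h.
Proof.
move=> Kx gK hK eqx; apply/eqP/gal_eqP => v _.
have : v \in <<K; x>>%VS by rewrite Kx memvf.
case/Fadjoin_polyP => q Kq ->.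
by rewrite -!horner_map /= !(fixedPoly_gal (subvf K)) // eqx.
Qed.

Lemma sigma_omega : sigma (zS ^+ (N %/ p)%N) * zS ^+ (N %/ p)%N = 1.
Proof.
rewrite galXz sigma_z -exprM -exprD.
have N1 := N_gt1.
have -> : (N.-1 * (N %/ p)%N + N %/ p = N * (N %/ p)%N)%N.
  move: (N %/ p)%N => d; move: N1; move: N => n; clear; nia.
by rewrite exprM (prim_expr_order hzS) expr1n.
Qed.

Lemma fixed_root2p (p2 : p != 2) c : c ^+ (2 * p) = 1 -> sigma c = c -> c = 1 \/ c = -1.
Proof.
move=> c2p sc.
have pw : p.-primitive_root (zS ^+ (N %/ p)%N).
  have pN : (p %| N)%N by rewrite -{1}(expn1 p) dvdn_exp2l.
  exact (dvdn_prim_root hzS pN).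
set w := zS ^+ (N %/ p)%N in pw.
have : (c ^+ 2) ^+ p = 1 by rewrite -exprM.
case/(prim_rootP pw) => i Di.
have wnz : w != 0 by rewrite (prim_root_eq0 pw) -lt0n prime_gt0.
have sw : sigma w = w^-1 by rewrite -[sigma w](mulfK wnz) sigma_omega div1r.
have : sigma (c ^+ 2) = c ^+ 2 by rewrite galXz sc.
rewrite Di galXz sw exprVn => /eqP.
move/eqP => H.
have : w ^+ (2 * i) == 1.
  by rewrite mul2n -addnn exprD -{1}H mulVf // expf_neq0.
rewrite -(prim_order_dvd pw) Gauss_dvdr; last first.
  by rewrite prime_coprime // dvdn_prime2 // eq_sym.
have ip := ltn_ord i; move/dvdn_leq => ple.
have i0 : nat_of_ord i = 0%N.
  move: ple ip; case: (nat_of_ord i) => // j H3 H4.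
  by move: (H3 isT) H4; clear; lia.
move/eqP: Di; rewrite i0 expr0 sqrf_eq1 => /orP[] /eqP ->; by [left | right].
Qed.

Lemma part2c (p2 : p != 2) : ~ has_efficient_mu_grading L (2 * p).
Proof.
case=> V0 hV0.
pose V : {ffun 'Z_(2 * p) -> {vspace SL}} := V0.
have hV : is_efficient_grading V := hV0.
have m1 : (1 < 2 * p)%N by have := prime_gt1 pp; clear; lia.
pose K := grK hV; pose x := grx V.
have Kx : <<K; x>>%VS = fullv := grK_adj m1 hV.
have xnz : x != 0 := grx_nz hV.
have xm : x ^+ (2 * p) \in K := grxm_K m1 hV.
have dimH : #|('Gal({:SL} / K))%g| = (2 * p)%N by rewrite -galois_dim ?galoisK // grK_dim.
pose rs := map (fun g : gal_of {:SL} => g x / x) (enum ('Gal({:SL} / K))%g).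
have rs_all : all (2 * p).-unity_root rs.
  apply/allP => _ /mapP[g gH ->]; rewrite mem_enum in gH.
  rewrite unity_rootE exprMn exprVn -galXz (fixed_gal (subvf K)) //.
  by rewrite divff // expf_neq0.
have rs_uniq : uniq rs.
  rewrite map_inj_in_uniq ?enum_uniq // => g h; rewrite !mem_enum => gH hH.
  move=> E; apply: (gal_eq_adj Kx gH hH); exact: (mulIf (invr_neq0 xnz) E).
have rs_size : size rs = (2 * p)%N by rewrite size_map -cardE dimH.
have m1rs : (-1 : SL) \in rs.
  apply/negPn/negP => nrs.
  have := @max_unity_roots _ (2 * p)%N (-1 :: rs).
  rewrite /= nrs rs_uniq rs_all rs_size ltnn unity_rootE andbT.
  move=> H; suff : false by []; apply: H => //; first exact: ltnW.
  by rewrite exprM sqrrN !expr1n.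
case/mapP: m1rs => h; rewrite mem_enum => hH /esym hx.
have hxx : h x = - x by rewrite -[h x](divfK xnz) hx mulN1r.
have hh : (h * h)%g = 1%g.
  apply: (gal_eq_adj Kx) => //; first by rewrite groupM.
  by rewrite galMz gal1z (congr1 h hxx) galNz hxx opprK.
have h1 : h != 1%g.
  apply/eqP => h1; move: hxx; rewrite h1 gal1z => /eqP.
  rewrite -subr_eq0 opprK -mulr2n -scaler_nat scaler_eq0 => /orP[] //.
  by rewrite (negPf xnz).
have hs : h = sigma by case: (invol p2 hh) => // E; rewrite E eqxx in h1.
have sub : {subset rs <= [:: 1; -1]}.
  move=> _ /mapP[g gH ->]; rewrite mem_enum in gH.
  have sg : sigma (g x) = - g x.
    have := congr1 (fun t : gal_of {:SL} => t x) (gal_comm g sigma).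
    by rewrite /= !galMz -hs hxx galNz.
  have : sigma (g x / x) = g x / x.
    by rewrite galMulz galVz sg -hs hxx invrN mulrNN.
  move/(fixed_root2p p2); case.
  - by rewrite exprMn exprVn -galXz (fixed_gal (subvf K)) // divff // expf_neq0.
  - by move=> ->; rewrite inE eqxx.
  - by move=> ->; rewrite !inE eqxx orbT.
have := uniq_leq_size rs_uniq sub; rewrite rs_size /=.
by have := prime_gt1 pp; clear; lia.
Qed.

Lemma Z2_cases (g : 'Z_2) : g = 0 \/ g = 1.
Proof. by case: g => [[|[|i]] Hi] //=; [left | right]; apply: val_inj. Qed.

Definition sE : 'End(SL) := sigma.

Lemma sEE v : sE v = sigma v. Proof. by []. Qed.

Definition Vs : {ffun 'Z_2 -> {vspace SL}} :=
  [ffun g => if g == 0 then fixedSpace sE else lker (sE + \1)%VF].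

Lemma Vs0P v : (v \in Vs 0) = (sigma v == v).
Proof. by rewrite ffunE eqxx; apply/fixedSpaceP/eqP. Qed.

Lemma Vs1P v : (v \in Vs 1) = (sigma v == - v).
Proof. by rewrite ffunE /= memv_ker add_lfunE id_lfunE addr_eq0. Qed.


Lemma sum_Z2 (U : {ffun 'Z_2 -> {vspace SL}}) : (\sum_(g : 'Z_2) U g)%VS = (U 0%R + U 1%R)%VS.
Proof.
change ((\sum_(g < 2) U g)%VS = (U 0%R + U 1%R)%VS).
rewrite big_ord_recl big_ord1; congr (U _ + U _)%VS; exact: val_inj.
Qed.

Lemma directv_Z2 (U : {ffun 'Z_2 -> {vspace SL}}) :
  (U 0%R :&: U 1%R = 0)%VS -> directv (\sum_(g : 'Z_2) U g).
Proof.
move=> cap; rewrite directvE /= sum_Z2 dimv_disjoint_sum //.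
change ((\dim (U 0%R) + \dim (U 1%R))%N == \sum_(g < 2) \dim (U g)).
rewrite big_ord_recl big_ord1; apply/eqP; congr (\dim (U _) + \dim (U _))%N; exact: val_inj.
Qed.

Lemma N_gt2 (p2 : p != 2) : (2 < N)%N.
Proof.
have p3 : (2 < p)%N by have := prime_gt1 pp; move: p2; clear; lia.
apply: leq_trans p3 _; rewrite -{1}(expn1 p) leq_pexp2l //; exact: prime_gt0.
Qed.

Lemma sigma_zS_neq (p2 : p != 2) : sigma zS != zS.
Proof.
rewrite sigma_z -{2}(expr1 zS) (eq_prim_root_expr hzS).
have N2 := N_gt2 p2.
rewrite !modn_small.
all: try by move: N2; clear; lia.
all: by move: N2; move: N => n; case: n => [|[|[|n]]].
Qed.

Lemma char0_neq (v : SL) : v = - v -> v = 0.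
Proof.
move=> /eqP; rewrite -subr_eq0 opprK -mulr2n -scaler_nat scaler_eq0 => /orP[] //.
by move/eqP.
Qed.

Lemma Vs_grading (p2 : p != 2) : is_efficient_grading Vs.
Proof.
split; first split.
- apply/eqP; rewrite eqEsubv subvf /= sum_Z2; apply/subvP => v _.
  have -> : v = (1/2 : rat) *: (v + sigma v) + (1/2 : rat) *: (v - sigma v).
    by rewrite -scalerDr addrACA subrr addr0 -mulr2n -scaler_nat scalerA; 
       rewrite mulrC divff ?scale1r.
  apply: memv_add.
    by rewrite Vs0P -sEE linearZ /= linearD /= !sEE sigma_sigma addrC.
  by rewrite Vs1P -sEE linearZ /= linearB /= !sEE sigma_sigma -scalerN opprB.
- apply: directv_Z2; apply/eqP; rewrite -subv0; apply/subvP => v.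
  rewrite memv_cap Vs0P Vs1P => /andP[/eqP h0 /eqP h1].
  by rewrite memv0; apply/eqP/char0_neq; rewrite -h1 h0.
- by rewrite Vs0P -sEE rmorph1.
- have G00 : ((0%R : 'Z_2) * (0%R : 'Z_2))%g = 0%R by apply: val_inj.
  have G01 : ((0%R : 'Z_2) * (1%R : 'Z_2))%g = 1%R by apply: val_inj.
  have G10 : ((1%R : 'Z_2) * (0%R : 'Z_2))%g = 1%R by apply: val_inj.
  have G11 : ((1%R : 'Z_2) * (1%R : 'Z_2))%g = 0%R by apply: val_inj.
  move=> g h a b; case: (Z2_cases g) => ->; case: (Z2_cases h) => ->;
  rewrite ?G00 ?G01 ?G10 ?G11 !(Vs0P, Vs1P) galMulz => /eqP -> /eqP ->;
  by rewrite ?mulrN ?mulNr ?opprK.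
- have S : [set g : 'Z_2 | Vs g != 0%VS] = setT.
    apply/setP => g; rewrite !inE; case: (Z2_cases g) => ->.
      by apply/eqP => E; have := Vs0P 1; rewrite E memv0 oner_eq0 gal1Mz eqxx.
    apply/eqP => E; have := Vs1P (zS - sigma zS); rewrite E memv0.
    rewrite galBz sigma_sigma opprB eqxx subr_eq0 eq_sym => H.
    by move: (sigma_zS_neq p2); rewrite H.
  by rewrite S gen_set_id // group_setT.
Qed.



Lemma Vs_unique (p2 : p != 2) (W : {ffun 'Z_2 -> {vspace SL}}) :
  is_efficient_grading W -> Vs = W.
Proof.
move=> hW; have m1 : (1 < 2)%N by [].
pose K := grK hW; pose x := grx W.
have Kx : <<K; x>>%VS = fullv := grK_adj m1 hW.
have xnz : x != 0 := grx_nz hW.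
have x2 : x ^+ 2 \in K := grxm_K m1 hW.
have dimH : #|('Gal({:SL} / K))%g| = 2%N by rewrite -galois_dim ?galoisK // grK_dim.
have [t tH t1] : exists2 t, t \in ('Gal({:SL} / K))%g & t != 1%g.
  by apply/trivgPn; rewrite trivg_card1 dimH.
have tx2 : (t x) ^+ 2 = x ^+ 2 by rewrite -galXz (fixed_gal (subvf K)).
have txx : t x = - x.
  have : (t x - x) * (t x + x) == 0 by rewrite -subr_sqr tx2 subrr.
  rewrite mulf_eq0 subr_eq0 addr_eq0 => /orP[] /eqP // E.
  have : t = 1%g by apply: (gal_eq_adj Kx) => //; rewrite ?group1 ?gal1z.
  by move/eqP; rewrite (negPf t1).
have tt : (t * t)%g = 1%g.
  apply: (gal_eq_adj Kx) => //; first by rewrite groupM.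
  by rewrite galMz gal1z (congr1 t txx) galNz txx opprK.
have ts : t = sigma.
  by case: (invol p2 tt) => // E; rewrite E eqxx in t1.
have s0 : (W 0%R <= Vs 0%R)%VS.
  apply/subvP => a Wa; rewrite Vs0P -ts.
  by rewrite (fixed_gal (subvf K)).
have s1 : (W 1%R <= Vs 1%R)%VS.
  apply/subvP => y Wy; rewrite Vs1P -ts.
  have yK : y / x \in K := gr_div1 m1 hW Wy.
  have -> : y = (y / x) * x by rewrite divfK.
  by rewrite galMulz (fixed_gal (subvf K)) // txx mulrN.
have hVs := Vs_grading p2.
have dW1 := gr_dim m1 hW 1%R; have dV1 := gr_dim m1 hVs 1%R.
have dW := grK_dimL m1 hW; have dV := grK_dimL m1 hVs.
have d0 : \dim (W 0%R) = \dim (Vs 0%R).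
  by apply/eqP; rewrite -(eqn_pmul2l (isT : (0 < 2)%N)) -dW -dV.
apply/ffunP => g; case: (Z2_cases g) => ->; apply/eqP; rewrite eq_sym eqEdim.
  by rewrite s0 d0 leqnn.
by rewrite s1 dW1 dV1 d0 leqnn.
Qed.
End Cyc.

Unset Implicit Arguments.
Unset Strict Implicit.

Theorem mainTheorem15 (p q k : nat) (pp : prime p) (pq : prime q) (hk : (1 <= k)%N)
    (L : fieldExtType rat) (z : L) (hz : (p ^ k)%N.-primitive_root z)
    (hL : <<1; z>>%VS = fullv) :
  (forall n : nat, (1 <= n)%N -> has_efficient_mu_grading L (q ^ n) ->
     (q ^ n = 2)%N \/ p = q) /\
  (p != 2%N ->
     (exists! V : {ffun mu 2 -> {vspace L}}, is_efficient_grading V) /\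
     ~ has_efficient_mu_grading L (2 * p)).
Proof.
split.
  by move=> n hn hg; apply: (part1 pp hk hz hL pq hn hg).
move=> p2; split; last exact: (part2c pp hk hz hL p2).
exists (Vs pp hk hz hL); split; first exact: (Vs_grading pp hk hz hL p2).
by move=> W hW; apply: (Vs_unique pp hk hz hL p2).
Qed.
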